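(* There exists a persuasion instance (with a single world, a single type consisting of two agents, two actions, and $d=1$) such that for every representative set $\bar{\mathcal A}$, no optimal private policy is supported only on representative joint actions; that is, every stable private policy $\sigma:\Omega\to\Delta(\bar{\mathcal A}\times G)$ achieves strictly smaller principal utility than some stable private policy $\sigma':\Omega\to\Delta(\mathcal A\times G')$.
   Context: A persuasion instance consists of: a finite set $\Omega$ of worlds; a prior $\mu\in\Delta(\Omega)$; agents $N=\{1,\dots,n\}$; a finite action set $A$; a partition $\mathcal T$ of $N$ into nonempty sets called types; for each $T\in\mathcal T$ a utility $u_T(a,\rho\mid\omega)\in\mathbb R$ defined for $a\in A$, action profiles $\rho$, and $\omega\in\Omega$; a principal utility $u_0(\rho\mid\omega)\in\mathbb R$; and an integer $d\ge 1$ (maximum coalition size). Joint actions are $\mathbf a\in\mathcal A=A^n$; the action profile of $\mathbf a$ is $\rho_{\mathbf a}:\mathcal T\times A\to\mathbb Z_{\ge0}$, $\rho_{\mathbf a}(T,a)=|\{i\in T:a_i=a\}|$. For $i\in T$, $u_i(\mathbf a\mid\omega)=u_T(a_i,\rho_{\mathbf a}\mid\omega)$. A policy is a map $\sigma:\Omega\to\Delta(\mathcal A\times G)$ (finitely supported distributions), where $G$ is a set of tuples $\mathbf g=(g_i)_{i\in N}$; elements $s=(\mathbf a,\mathbf g)$ are meta-signals. In the private mode agent $i$ observes only $s_i=(a_i,g_i)$. Agent $i$'s posterior upon observing $s_i$ is $\Pr(\tilde{\mathbf a},\omega\mid s_i)=\mu(\omega)\,\sigma(\{s'=(\tilde{\mathbf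 a},\mathbf g'):s'_i=s_i\}\mid\omega)\big/\sum_{\omega'}\mu(\omega')\,\sigma(\{s':s'_i=s_i\}\mid\omega')$. A meta-signal $s$ is unstable if there exist a nonempty $N'\subseteq N$ with $|N'|\le d$ and actions $(a'_i)_{i\in N'}$ such that for every $i\in N'$: $\sum_{\tilde{\mathbf a},\omega}\Pr(\tilde{\mathbf a},\omega\mid s_i)\,\big(u_i(\tilde{\mathbf a}\oplus\mathbf a'\mid\omega)-u_i(\tilde{\mathbf a}\mid\omega)\big)>0$, where $\tilde{\mathbf a}\oplus\mathbf a'$ replaces $\tilde a_i$ by $a'_i$ for all $i\in N'$; otherwise $s$ is stable. A policy is stable if every meta-signal it sends with positive probability is stable. The principal's utility is $u_0(\sigma)=\sum_\omega\mu(\omega)\sum_{(\mathbf a,\mathbf g)}\sigma((\mathbf a,\mathbf g)\mid\omega)\,u_0(\rho_{\mathbf a}\mid\omega)$. An optimal private policy is a stable private policy maximizing $u_0$ among all stable private policies. A representative set $\bar{\mathcal A}\subseteq\mathcal A$ contains, for each realizable action profile $\rho$, exactly one $\bar{\mathbf a}$ with $\rho_{\bar{\mathbf a}}=\rho$. *)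

(* Defs.v *)
From HB Require Import structures.
From mathcomp Require Import all_boot all_order all_algebra.
Set Implicit Arguments. Unset Strict Implicit. Unset Printing Implicit Defensive.
Import Order.TTheory GRing.Theory Num.Theory.
Local Open Scope ring_scope.

(* Agents are 'I_nagents; types are given by the map [typ] into the finite
   type [Ty] of type labels (the partition is the family of fibres). *)
Unset Implicit Arguments.
Record instance (R : realFieldType) := Instance {
  World : finType;
  prior : World -> R;
  nagents : nat;
  Act : finType;
  Ty : finType;
  typ : 'I_nagents -> Ty;
  uT : Ty -> Act -> {ffun Ty * Act -> nat} -> World -> R;
  u0 : {ffun Ty * Act -> nat} -> World -> R;
  dmax : nat }.
Arguments World {R} i.
Arguments prior {R} i _.
Arguments nagents {R} i.
Arguments Act {R} i.
Arguments Ty {R} i.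
Arguments typ {R} i _.
Arguments uT {R} i _ _ _ _.
Arguments u0 {R} i _ _.
Arguments dmax {R} i.
Set Implicit Arguments.

Section Persuasion.
Variable R : realFieldType.
Variable I : instance R.

Definition valid_instance : Prop :=
  [/\ (forall w, 0 <= prior I w),
      \sum_(w : World I) prior I w = 1,
      (forall T : Ty I, exists i, typ I i = T)
    & (1 <= dmax I)%N].

Definition jact := {ffun 'I_(nagents I) -> Act I}.

Definition profile (a : jact) : {ffun Ty I * Act I -> nat} :=
  [ffun p => #|[set i | (typ I i == p.1) && (a i == p.2)]|].

Definition ui (i : 'I_(nagents I)) (a : jact) (w : World I) : R :=
  uT I (typ I i) (a i) (profile a) w.

Definition meta (S : eqType) := (jact * {ffun 'I_(nagents I) -> S})%type.

(* a policy: finitely supported distributions sigma(. | w) *)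
Record policy (S : eqType) := Policy {
  supp : seq (meta S);
  prob : World I -> meta S -> R }.

Definition valid_policy S (sg : policy S) : Prop :=
  [/\ uniq (supp sg),
      (forall w s, 0 <= prob sg w s),
      (forall w s, s \notin supp sg -> prob sg w s = 0)
    & (forall w, \sum_(s <- supp sg) prob sg w s = 1)].

(* what agent i observes in the private mode: s_i = (a_i, g_i) *)
Definition obs S i (s : meta S) : (Act I * S)%type := (s.1 i, s.2 i).

Definition prob_obs S (sg : policy S) i (o : Act I * S) w : R :=
  \sum_(s <- supp sg | obs i s == o) prob sg w s.

Definition joint_obs S (sg : policy S) i (o : Act I * S) (b : jact) w : R :=
  \sum_(s <- supp sg | (s.1 == b) && (obs i s == o)) prob sg w s.

Definition posterior S (sg : policy S) i (o : Act I * S) (b : jact) w : R :=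
  prior I w * joint_obs sg i o b w /
  \sum_(w' : World I) prior I w' * prob_obs sg i o w'.

Definition deviate (b : jact) (N' : {set 'I_(nagents I)}) (a' : jact) : jact :=
  [ffun j => if j \in N' then a' j else b j].

Definition unstable S (sg : policy S) (s : meta S) : Prop :=
  exists N' : {set 'I_(nagents I)},
    [/\ N' != set0, (#|N'| <= dmax I)%N &
    exists a' : jact, forall i, i \in N' ->
      0 < \sum_(b : jact) \sum_(w : World I)
            posterior sg i (obs i s) b w * (ui i (deviate b N' a') w - ui i b w)].

Definition stable S (sg : policy S) (s : meta S) : Prop := ~ unstable sg s.

Definition sent S (sg : policy S) (s : meta S) : Prop :=
  0 < \sum_(w : World I) prior I w * prob sg w s.

Definition stable_policy S (sg : policy S) : Prop :=
  forall s, sent sg s -> stable sg s.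

Definition util0 S (sg : policy S) : R :=
  \sum_(w : World I) prior I w *
    \sum_(s <- supp sg) prob sg w s * u0 I (profile s.1) w.

Definition is_repr (Ab : {set jact}) : Prop :=
  forall a : jact, #|[set b in Ab | profile b == profile a]| = 1%N.

Definition supported_on S (Ab : {set jact}) (sg : policy S) : Prop :=
  forall w s, prob sg w s != 0 -> s.1 \in Ab.

End Persuasion.

(* Main.v *)
Require Import Defs.
From HB Require Import structures.
From mathcomp Require Import all_boot all_order all_algebra.
From mathcomp Require Import reals.
From mathcomp Require Import lra.
Import Order.TTheory GRing.Theory Num.Theory.
Local Open Scope ring_scope.

Definition o1 : 'I_2 := @Ordinal 2 1 (erefl true).
Section Ex.
Variable R : realType.
Definition uTf (t:unit) (a:bool) (rho : {ffun unit*bool -> nat}) (w:unit) : R :=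
  if a then (if rho (tt,true) == 1%N then 7 else 0)
  else (if rho (tt,true) == 0%N then 6 else 2).
Definition u0f (rho : {ffun unit*bool -> nat}) (w:unit) : R :=
  if rho (tt,true) == 0%N then 1 else 0.
Definition I0 : instance R :=
  @Defs.Instance R unit (fun _ => 1) 2 bool unit (fun _ => tt) uTf u0f 1.

Lemma sum_unit (F : World I0 -> R) : \sum_(w : World I0) F w = F tt.
Proof. by rewrite (big_pred1 tt) // => -[]. Qed.

Lemma ord2 (j : 'I_2) : j = ord0 \/ j = o1.
Proof. case: j => -[|[|n]] Hj; [left|right|by []]; exact: val_inj. Qed.

Lemma prof (b : jact I0) c : profile b (tt, c) = ((b ord0 == c) + (b o1 == c))%N.
Proof.
rewrite ffunE -sum1_card big_mkcond /= big_ord_recl big_ord_recl big_ord0 !inE /=.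
have -> : lift ord0 ord0 = o1 by apply: val_inj.
by case: (b ord0 == c); case: (b o1 == c).
Qed.

Lemma post_sum S (sg : policy I0 S) i o (f : jact I0 -> World I0 -> R) :
  \sum_(b : jact I0) \sum_(w : World I0) posterior sg i o b w * f b w =
  (\sum_(s <- supp sg | obs i s == o) prob sg tt s * f s.1 tt) /
  (\sum_(s <- supp sg | obs i s == o) prob sg tt s).
Proof.
under eq_bigr => b _ do rewrite sum_unit /posterior sum_unit /= !mul1r.
rewrite /prob_obs.
under eq_bigr => b _ do rewrite mulrAC.
rewrite -mulr_suml; congr (_ / _).
under eq_bigr => b _ do rewrite /joint_obs big_distrl /= big_mkcond /=.
rewrite exchange_big /= [RHS]big_mkcond /=; apply: eq_bigr => s _.
rewrite (bigD1 s.1) //= eqxx /= big1 ?addr0 //.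
by move=> b /negbTE; rewrite eq_sym => ->.
Qed.

Definition mk (x y : bool) : jact I0 := [ffun j => if j == ord0 then x else y].

Lemma jact_eq (b : jact I0) : b = mk (b ord0) (b o1).
Proof. by apply/ffunP => j; rewrite ffunE; case: (ord2 j) => ->. Qed.

Lemma ui_dev_CC (i : 'I_(nagents I0)) :
  ui i (deviate (mk false false) [set i] [ffun _ => true]) tt - ui i (mk false false) tt = 1.
Proof.
rewrite /ui /= /uTf !prof !ffunE !inE.
by case: (ord2 i) => -> /=; lra.
Qed.

Lemma mk_neq : mk false true != mk true false.
Proof. by apply/eqP => /ffunP /(_ ord0); rewrite !ffunE. Qed.

Lemma prof_mk : profile (mk true false) = profile (mk false true).
Proof. by apply/ffunP => -[[] c]; rewrite !prof !ffunE /=; case: c. Qed.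

Lemma repr_agent (Ab : {set jact I0}) : is_repr Ab ->
  exists i : 'I_(nagents I0), forall b, b \in Ab -> b i = false -> b = mk false false.
Proof.
move=> HA.
have Hno : ~~ ((mk false true \in Ab) && (mk true false \in Ab)).
  apply/negP => /andP [H1 H2].
  have := HA (mk false true).
  have : [set mk false true; mk true false] \subset
         [set b in Ab | profile b == profile (mk false true)].
    apply/subsetP => x; rewrite !inE => /orP [] /eqP ->.
      by rewrite H1 eqxx.
    by rewrite H2 prof_mk eqxx.
  move/subset_leq_card; rewrite cards2 mk_neq => H le. by rewrite le in H.
case: (boolP (mk true false \in Ab)) => H.
  exists ord0 => b Hb H0; rewrite (jact_eq b) H0.
  case E: (b o1) => //; rewrite (jact_eq b) H0 E in Hb.
  by rewrite Hb H in Hno.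
exists o1 => b Hb H0; rewrite (jact_eq b) H0.
case E: (b ord0) => //; rewrite (jact_eq b) H0 E in Hb.
by rewrite Hb in H.
Qed.

Lemma Zpos S (sg : policy I0 S) i s : valid_policy sg -> 0 < prob sg tt s ->
  0 < \sum_(s' <- supp sg | obs i s' == obs i s) prob sg tt s'.
Proof.
case=> Hu Hge Hout _ Hp.
have Hs : s \in supp sg.
  by apply: contraT => /(Hout tt) H; rewrite H ltxx in Hp.
rewrite big_mkcond (bigD1_seq s) //= eqxx.
have : 0 <= \sum_(i0 <- supp sg | i0 != s)
   (if obs i i0 == obs i s then prob sg tt i0 else 0).
  by apply: sumr_ge0 => x _; case: ifP.
lra.
Qed.

Lemma repr_util (Ab : {set jact I0}) S (sg : policy I0 S) :
  is_repr Ab -> valid_policy sg -> stable_policy sg -> supported_on Ab sg ->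
  util0 sg = 0.
Proof.
move=> HA Hv Hst Hsup.
have [i Hi] := @repr_agent Ab HA.
have Hv' := Hv; case: Hv' => Hu Hge Hout _.
rewrite /util0 sum_unit mul1r; apply: big1_seq => s Hs.
rewrite /= /u0f prof.
case E: (_ == 0)%N; last by rewrite mulr0.
have HCC : s.1 = mk false false.
  rewrite (jact_eq s.1); move: E; by case: (s.1 ord0); case: (s.1 o1).
apply/eqP; rewrite mulr1; apply: contraT => Hp.
have Hpos : 0 < prob sg tt s by rewrite lt_def Hp Hge.
exfalso; apply: (Hst s); first by rewrite /sent sum_unit mul1r.
exists [set i]; split.
- by apply/set0Pn; exists i; rewrite set11.
- by rewrite cards1.
exists [ffun _ => true] => j; rewrite inE => /eqP ->.
rewrite post_sum.
rewrite (eq_bigr (fun s' => prob sg tt s')); last first.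
  move=> s' /eqP Ho.
  case: (eqVneq (prob sg tt s') 0) => [->|Hn]; first by rewrite mul0r.
  have Hb : s'.1 = mk false false.
    apply: Hi; first exact: (Hsup tt).
    by move: Ho; rewrite /obs HCC => -[-> _]; rewrite ffunE; case: (ord2 i) => ->.
  by rewrite Hb ui_dev_CC mulr1.
by rewrite divff ?ltr01 // gt_eqF // Zpos.
Qed.

Definition g0 : {ffun 'I_(nagents I0) -> unit} := [ffun _ => tt].
Definition sp : seq (meta I0 unit) :=
  [:: (mk false false, g0); (mk false true, g0); (mk true false, g0)].
Definition sg1 : policy I0 unit :=
  Policy sp (fun _ s => if s \in sp then 3^-1 else 0).

Lemma sp_uniq : uniq sp.
Proof.
rewrite /sp /= !inE !xpair_eqE !eqxx !andbT mk_neq /= andbT.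
by apply/norP; split; apply/eqP => /ffunP;
  [move/(_ o1)|move/(_ ord0)]; rewrite !ffunE.
Qed.

Lemma sg1_valid : valid_policy sg1.
Proof.
split.
- exact: sp_uniq.
- by move=> w s /=; case: ifP => // _; rewrite invr_ge0; lra.
- by move=> w s /= /negbTE ->.
- move=> w; rewrite /= !big_cons big_nil !inE !eqxx /= ?orbT; lra.
Qed.

Lemma sg1_util : util0 sg1 = 3^-1.
Proof.
rewrite /util0 sum_unit mul1r /= !big_cons big_nil !inE !eqxx /= ?orbT.
rewrite /u0f !prof !ffunE /=; lra.
Qed.

Lemma sg1_stable : stable_policy sg1.
Proof.
move=> s Hs [N' [Hne Hc [a' H]]].
have Hp : s \in sp.
  by move: Hs; rewrite /sent sum_unit mul1r /=; case: ifP => //; rewrite ltxx.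
have [i HN] : exists i, N' = [set i].
  by apply/cards1P; rewrite eqn_leq Hc card_gt0 Hne.
move: (H i); rewrite HN set11 => /(_ isT); rewrite post_sum.
apply/negP; rewrite -leNgt; apply: mulr_le0_ge0; last first.
  by rewrite invr_ge0 sumr_ge0 // => x _ /=; case: (x \in sp) => //; rewrite invr_ge0; lra.
move: Hp; rewrite !inE => /or3P [] /eqP ->; case: (ord2 i) => ->;
  rewrite /= !big_cons big_nil /obs /= !ffunE /=.
all: rewrite /ui /uTf /= !prof !ffunE /= !inE /=.
all: rewrite !eqxx ?orbT /=.
all: case: (a' _) => /=; rewrite ?invr_ge0; lra.
Qed.
End Ex.

Theorem proposition1 (R : realType) :
  exists I : instance R,
    [/\ valid_instance I, #|World I| = 1%N, nagents I = 2%N, #|Act I| = 2%N &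
        #|Ty I| = 1%N] /\ dmax I = 1%N /\
    forall Ab : {set jact I}, is_repr Ab ->
    forall (S : eqType) (sg : policy I S),
      valid_policy sg -> stable_policy sg -> supported_on Ab sg ->
      exists (S' : eqType) (sg' : policy I S'),
        [/\ valid_policy sg', stable_policy sg' & util0 sg < util0 sg'].
Proof.
exists (I0 R); split; [split|split] => //.
- split => //=.
  + by rewrite (big_pred1 tt) // => -[].
  + by move=> -[]; exists ord0.
- by rewrite card_unit.
- by rewrite card_bool.
- by rewrite card_unit.
move=> Ab HA S sg Hv Hst Hsup.
exists unit, (sg1 R); split.
- exact: sg1_valid.
- exact: sg1_stable.
rewrite (@repr_util R Ab S sg HA Hv Hst Hsup) sg1_util invr_gt0; lra.
Qed.
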